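(* Let $G$ and $H$ be nontrivial finite groups. The cyclic graph $\Delta(G\times H)$ is disconnected if and only if there exists a prime $p$ such that $G$ contains an element of order $p$ whose centralizer in $G$ is a $p$-group and $H$ contains an element of order $p$ whose centralizer in $H$ is a $p$-group.
   Context: For a finite group $X$, the cyclic graph $\Delta(X)$ has vertex set $X^{\#}=X\setminus\{1\}$, and distinct vertices $x,y$ are adjacent if and only if the subgroup $\langle x,y\rangle$ is cyclic. *)

(* Defs.v *)
From mathcomp Require Import all_boot all_fingroup all_solvable.
Set Implicit Arguments. Unset Strict Implicit. Unset Printing Implicit Defensive.
Local Open Scope group_scope.

Definition cyclic_adj (gT : finGroupType) (X : {set gT}) : rel gT :=
  [rel x y | [&& x \in X^#, y \in X^#, x != y & cyclic <<[set x; y]>>]].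

Definition cyclic_graph_connected (gT : finGroupType) (X : {set gT}) : Prop :=
  forall x y, x \in X^# -> y \in X^# -> connect (cyclic_adj X) x y.

(* Main.v *)
Require Import Defs.
From mathcomp Require Import all_boot all_fingroup all_solvable.
From Stdlib Require Import Classical_Prop.
Set Implicit Arguments. Unset Strict Implicit. Unset Printing Implicit Defensive.
Local Open Scope group_scope.
Section Gen.
Variables (gT : finGroupType) (X : {group gT}).
Local Notation adj := (cyclic_adj X).
Local Notation con := (connect (cyclic_adj X)).

Lemma adj_sym : symmetric adj.
Proof.
move=> x y; rewrite /cyclic_adj /= eq_sym setUC.
by case: (x \in X^#); case: (y \in X^#).
Qed.

Lemma con_sym x y : con x y = con y x.
Proof. exact: (sym_connect_sym adj_sym). Qed.

Lemma adj_cyc a b c : a \in X^# -> b \in X^# -> a != b ->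
  a \in <[c]> -> b \in <[c]> -> adj a b.
Proof.
move=> aX bX ab ac bc; rewrite /cyclic_adj /= aX bX ab /=.
apply: (cyclicS _ (cycle_cyclic c)); rewrite gen_subG.
by apply/subsetP=> z /set2P[]->.
Qed.

Lemma adj_cop a b : a \in X^# -> b \in X^# -> commute a b ->
  coprime #[a] #[b] -> adj a b.
Proof.
move=> aX bX cab co.
have ab : a != b.
  apply/eqP=> eab; move: co; rewrite eab /coprime gcdnn order_eq1 => /eqP b1.
  by move: bX; rewrite b1 !inE eqxx.
apply: (adj_cyc (c := a * b)) => //.
  by rewrite -cycle_subG cycleMsub.
by rewrite -cycle_subG cab cycleMsub // coprime_sym.
Qed.

Lemma con_pow a k : a \in X^# -> a ^+ k != 1 -> con a (a ^+ k).
Proof.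
move=> aX ak; have [<-|ne] := eqVneq a (a ^+ k); first exact: connect0.
apply: connect1; apply: (adj_cyc (c := a)) => //; last exact: mem_cycle.
  by rewrite !inE ak groupX //; case/setD1P: aX.
exact: cycle_id.
Qed.

Lemma prime_pow (a : gT) : a != 1 -> exists2 p, prime p & #[a ^+ (#[a] %/ p)] = p.
Proof.
move=> a1; have o1 : 1 < #[a].
  by rewrite ltn_neqAle eq_sym order_eq1 a1 order_gt0.
exists (pdiv #[a]); first exact: pdiv_prime.
by rewrite orderXdiv ?dvdn_div ?pdiv_dvd // divnA ?pdiv_dvd // mulKn.
Qed.

Lemma notpg_elt (p : nat) (A : {group gT}) : ~~ p.-group A ->
  exists2 u, u \in A & prime #[u] /\ #[u] != p.
Proof.
rewrite /pgroup /pnat cardG_gt0 /= => /allPn[r]; rewrite mem_primes => /and3P[pr _ rd] rp.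
have [u uA ou] := Cauchy pr rd.
exists u => //; rewrite ou; split => //; apply: contra rp => /eqP ->.
Qed.

End Gen.
Section Pair.
Variables (gT1 gT2 : finGroupType).

Lemma pairM (a c : gT1) (b d : gT2) : ((a, b) : gT1 * gT2) * (c, d) = (a * c, b * d).
Proof. by []. Qed.

Lemma pairX (a : gT1) (b : gT2) n : ((a, b) : gT1 * gT2) ^+ n = (a ^+ n, b ^+ n).
Proof. by elim: n => // n IH; rewrite !expgS IH. Qed.

Lemma pair_eq1 (a : gT1) (b : gT2) : (((a, b) : gT1 * gT2) == 1) = (a == 1) && (b == 1).
Proof. by []. Qed.

Lemma order_g1 (a : gT1) : #[((a, 1) : gT1 * gT2)] = #[a].
Proof.
apply/eqP; rewrite eqn_dvd !order_dvdn pairX expg_order expg1n eqxx /=.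
by have := expg_order ((a, 1) : gT1 * gT2); rewrite pairX => -[-> _].
Qed.

Lemma order_1g (b : gT2) : #[((1, b) : gT1 * gT2)] = #[b].
Proof.
apply/eqP; rewrite eqn_dvd !order_dvdn pairX expg_order expg1n eqxx /=.
by have := expg_order ((1, b) : gT1 * gT2); rewrite pairX => -[_ ->].
Qed.

Lemma order_pp p (a : gT1) (b : gT2) : prime p -> #[a] = p -> #[b] = p ->
  #[((a, b) : gT1 * gT2)] = p.
Proof.
move=> pp oa ob; apply/prime_nt_dvdP => //.
  rewrite order_eq1 pair_eq1 -order_eq1 oa; apply/nandP; left.
  by apply: contraTneq pp => ->.
by rewrite order_dvdn pairX pair_eq1 -!order_dvdn oa ob dvdnn.
Qed.

Lemma pair_comm (a c : gT1) (b d : gT2) : commute a c -> commute b d ->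
  commute ((a, b) : gT1 * gT2) (c, d).
Proof. by move=> h1 h2; rewrite /commute !pairM h1 h2. Qed.

Lemma pair_comm_inv (a c : gT1) (b d : gT2) :
  commute ((a, b) : gT1 * gT2) (c, d) -> commute a c /\ commute b d.
Proof. by rewrite /commute !pairM => -[]. Qed.

End Pair.
Section Back.
Variables (gT1 gT2 : finGroupType) (G : {group gT1}) (H : {group gT2}).
Local Notation X := (setX_group G H).

Lemma back (p : nat) (x : gT1) (y : gT2) : prime p -> x \in G -> #[x] = p ->
  p.-group 'C_G[x] -> y \in H -> #[y] = p -> p.-group 'C_H[y] ->
  ~ cyclic_graph_connected (setX G H).
Proof.
move=> pp xG ox pCx yH oy pCy.
set v0 : gT1 * gT2 := (x, y).
have ov0 : #[v0] = p by apply: order_pp.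
have x1 : x != 1 by rewrite -order_eq1 ox; apply: contraTneq pp => ->.
have y1 : y != 1 by rewrite -order_eq1 oy; apply: contraTneq pp => ->.
have pC : p.-group 'C_X[v0].
  apply: (pgroupS (G := setX 'C_G[x] 'C_H[y])).
    apply/subsetP => -[a b] /setIP[]; rewrite in_setX => /andP[aG bH].
    move=> hc; have /pair_comm_inv[c1 c2] := elimT cent1P hc.
    rewrite in_setX; apply/andP; split; apply/setIP; split => //; exact: (introT cent1P).
  by rewrite /pgroup cardsX pnatM; apply/andP; split; [exact: pCx | exact: pCy].
have step : forall z w, cyclic_adj (setX G H) z w -> v0 \in <[z]> -> v0 \in <[w]>.
  move=> z w /and4P[zX wX _ cyc] v0z.
  set C := <<[set z; w]>> in cyc.
  have zC : z \in C by rewrite mem_gen // set21.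
  have wC : w \in C by rewrite mem_gen // set22.
  have CX : C \subset X.
    rewrite gen_subG; apply/subsetP => u /set2P[]->.
      by case/setD1P: zX.
    by case/setD1P: wX.
  have v0C : v0 \in C by apply: (subsetP _ _ v0z); rewrite cycle_subG.
  have pCC : p.-group C.
    apply: pgroupS pC; apply/subsetP => c cC; rewrite inE (subsetP CX) //=.
    apply: (introT cent1P); have := cyclic_abelian cyc; rewrite abelianE => /centsP ab.
    exact: ab.
  have w1 : w != 1 by case/setD1P: wX.
  have [q pq oq] := prime_pow w1.
  set w' := w ^+ _ in oq.
  have w'C : w' \in C by rewrite groupX.
  have qp : q = p.
    have := mem_p_elt pCC w'C; rewrite /p_elt oq pnatE //.
    by rewrite inE => /eqP.
  have : <[w']> :==: <[v0]>.
    rewrite (eq_subG_cyclic cyc) ?cycle_subG // -!orderE oq ov0 qp.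
    done.
  move/eqP => e; have : v0 \in <[w']> by rewrite e cycle_id.
  by apply: subsetP; rewrite cycle_subG mem_cycle.
move=> conn.
have v0X : v0 \in (setX G H)^#.
  by rewrite !inE xG yH !andbT; apply: contra x1 => /eqP; rewrite /v0 => -[-> _].
have x1X : ((x, 1) : gT1 * gT2) \in (setX G H)^#.
  by rewrite !inE xG group1 !andbT; apply/eqP => /(congr1 fst) /= e; rewrite e eqxx in x1.
have := conn _ _ v0X x1X.
move/(closed_connect (a := [pred z | v0 \in <[z]>])).
have -> : (v0 \in [pred z | v0 \in <[z]>]) = true by rewrite inE cycle_id.
have cl : closed (cyclic_adj (setX G H)) [pred z | v0 \in <[z]>].
  move=> z w zw; rewrite !inE; apply/idP/idP; first exact: step.
  by apply: step; rewrite adj_sym.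
move/(_ cl); rewrite inE => /esym /cycleP[k].
rewrite pairX expg1n => -[_ ey].
by move: y1; rewrite ey eqxx.
Qed.

End Back.
Section Fwd.
Variables (gT1 gT2 : finGroupType) (G : {group gT1}) (H : {group gT2}).
Local Notation X := (setX_group G H).
Local Notation V := ((setX G H)^#).
Local Notation con := (connect (cyclic_adj (setX G H))).
Local Notation adj := (cyclic_adj (setX G H)).

Hypothesis Hyp : forall p x y, prime p -> x \in G -> #[x] = p -> y \in H -> #[y] = p ->
  (~~ p.-group 'C_G[x]) || (~~ p.-group 'C_H[y]).

Definition pureP (z : gT1 * gT2) := [&& z \in V, prime #[z] & (z.1 == 1) || (z.2 == 1)].

Lemma inV (a : gT1) (b : gT2) : (((a, b) : gT1 * gT2) \in V) = [&& (a != 1) || (b != 1), a \in G & b \in H].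
Proof.
rewrite !inE; congr (_ && _); apply/idP/idP.
  by apply: contraR => /norP[/negbNE/eqP -> /negbNE/eqP ->].
by apply: contraL => /eqP e; move: (congr1 fst e) (congr1 snd e) => /= -> ->; rewrite !eqxx.
Qed.

Lemma ne1_prime (gT : finGroupType) (u : gT) : prime #[u] -> u != 1.
Proof. by rewrite -order_eq1 => pu; apply: contraTneq pu => ->. Qed.

Lemma coprime_primes p q : prime p -> prime q -> p != q -> coprime p q.
Proof. by move=> pp pq ne; rewrite prime_coprime // dvdn_prime2 //. Qed.

Lemma lemD p g h : prime p -> g \in G -> #[g] = p -> h \in H -> #[h] = p ->
  exists2 w, pureP w & [/\ coprime #[w] p, commute w (g, 1) & commute w (1, h)].
Proof.
move=> pp gG og hH oh.
case/orP: (Hyp pp gG og hH oh) => /notpg_elt[u /setIP[uG /cent1P cu] [pu up]].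
  exists (u, 1).
    by rewrite /pureP inV ne1_prime //= uG group1 order_g1 pu eqxx orbT.
  split; first by rewrite order_g1 coprime_primes.
    exact: pair_comm cu (commute1 _).
  exact: pair_comm (commute1 _) (commute_sym (commute1 _)).
exists (1, u).
  by rewrite /pureP inV (ne1_prime pu) orbT uG group1 order_1g pu eqxx.
split; first by rewrite order_1g coprime_primes.
  exact: pair_comm (commute_sym (commute1 _)) (commute1 _).
exact: pair_comm (commute1 _) cu.
Qed.


Lemma stepA a : a \in V -> exists2 a', (a' \in V) && prime #[a'] & con a a'.
Proof.
move=> aV; have a1 : a != 1 by case/setD1P: aV.
have [q pq oq] := prime_pow a1.
set a' := a ^+ _ in oq.
have pa' : prime #[a'] by rewrite oq.
exists a'; last by apply: con_pow => //; apply: ne1_prime.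
rewrite pa' andbT in_setD1 ne1_prime //= groupX //.
by case/setD1P: aV.
Qed.

Lemma stepB a : a \in V -> prime #[a] -> exists2 w, pureP w & con a w.
Proof.
case: a => g h aV pa.
have [g1|g1] := eqVneq g 1.
  by exists (g, h) => //; rewrite /pureP aV pa g1 eqxx.
have [h1|h1] := eqVneq h 1.
  by exists (g, h) => //; rewrite /pureP aV pa h1 eqxx orbT.
set p := #[_] in pa.
have e := expg_order ((g, h) : gT1 * gT2); rewrite pairX in e.
case: e => eg eh.
have og : #[g] = p by apply/prime_nt_dvdP; rewrite ?order_eq1 ?order_dvdn ?eg.
have oh : #[h] = p by apply/prime_nt_dvdP; rewrite ?order_eq1 ?order_dvdn ?eh.
move: aV; rewrite inV => /and3P[_ gG hH].
have [w pw [cop c1 c2]] := lemD pa gG og hH oh.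
exists w => //; apply: connect1; rewrite adj_sym.
case/and3P: pw => wV _ _.
apply: adj_cop => //; first by rewrite inV g1 gG hH.
have -> : ((g, h) : gT1 * gT2) = (g, 1) * (1, h) by rewrite pairM mulg1 mul1g.
exact: commuteM.
Qed.

Lemma stepC g h : g \in G -> prime #[g] -> h \in H -> prime #[h] ->
  con (g, 1) (1, h).
Proof.
move=> gG pg hH ph.
have gV : ((g, 1) : gT1 * gT2) \in V by rewrite inV (ne1_prime pg) gG group1.
have hV : ((1, h) : gT1 * gT2) \in V by rewrite inV (ne1_prime ph) orbT hH group1.
have [e|ne] := eqVneq #[g] #[h].
  have [w pw [cop c1 c2]] := lemD pg gG erefl hH (esym e).
  case/and3P: pw => wV _ _.
  apply: (connect_trans (y := w)); apply: connect1.
    rewrite adj_sym; apply: adj_cop => //.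
    by rewrite order_g1.
  apply: adj_cop => //.
  by rewrite order_1g -e.
apply: connect1; apply: adj_cop => //.
  exact: pair_comm (commute1 _) (commute_sym (commute1 _)).
by rewrite order_g1 order_1g coprime_primes.
Qed.

Lemma conn_all : G :!=: 1 -> H :!=: 1 -> cyclic_graph_connected (setX G H).
Proof.
move=> /trivgPn[g gG g1] /trivgPn[h hH h1].
have [q pq oq] := prime_pow g1.
set g0 := g ^+ _ in oq.
have [r pr or] := prime_pow h1.
set h0 := h ^+ _ in or.
have g0G : g0 \in G by rewrite groupX.
have h0H : h0 \in H by rewrite groupX.
have pg0 : prime #[g0] by rewrite oq.
have ph0 : prime #[h0] by rewrite or.
have stepD : forall z, pureP z -> con z (g0, 1).
  case=> a b /and3P[zV pz /orP[/eqP /= a1|/eqP /= b1]].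
    rewrite a1 (sym_connect_sym (@adj_sym _ _)).
    rewrite a1 order_1g in pz; move: zV; rewrite inV => /and3P[_ _ bH].
    exact: stepC.
  rewrite b1; rewrite b1 order_g1 in pz; move: zV; rewrite inV => /and3P[_ aG _].
  apply: (connect_trans (stepC aG pz h0H ph0)).
  rewrite (sym_connect_sym (@adj_sym _ _)).
  exact: stepC.
have toHub : forall x, x \in V -> con x (g0, 1).
  move=> x xV; have [x' /andP[x'V px'] cx] := stepA xV.
  have [w pw cw] := stepB x'V px'.
  exact: connect_trans cx (connect_trans cw (stepD _ pw)).
move=> x y xV yV.
apply: (connect_trans (toHub _ xV)).
rewrite (sym_connect_sym (@adj_sym _ _)).
exact: toHub.
Qed.

End Fwd.

Unset Implicit Arguments.

Theorem corollary4p6 (gT1 gT2 : finGroupType) (G : {group gT1}) (H : {group gT2})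
  (ntG : G :!=: 1) (ntH : H :!=: 1) :
  ~ cyclic_graph_connected (setX G H) <->
  exists p : nat, [/\ prime p,
     (exists2 x, x \in G & (#[x] = p /\ p.-group 'C_G[x])) &
     (exists2 y, y \in H & (#[y] = p /\ p.-group 'C_H[y]))].
Proof.
split.
  move=> nc; apply: NNPP => nex; apply: nc.
  apply: (conn_all _ ntG ntH) => p x y pp xG ox yH oy.
  case: (boolP (p.-group 'C_G[x])) => //= pgx.
  case: (boolP (p.-group 'C_H[y])) => //= pgy.
  by exfalso; apply: nex; exists p; split => //; [exists x | exists y].
case=> p [pp [x xG [ox px]] [y yH [oy py]]].
exact: back pp xG ox px yH oy py.
Qed.
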